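(* Let $\psi(x)=-2\pi\sin(2\pi x)$, $b\ge2$ an integer, $\gamma\in(1/b,1)$, and let $\Delta_{b,\gamma}=\max_{t\in\mathbb{R}}(\sin(bt)+\gamma\sin t)$. If $k,l\in\mathcal{A}$ and $x^*\in\mathbb{R}$ satisfy $(k,l)\in E(1,x^* )$, then $$\Big|\sin\tfrac{2\pi(x^*+k)}{b}-\sin\tfrac{2\pi(x^*+l)}{b}\Big|\le\frac{2\Delta_{b,\gamma}\gamma}{1-\gamma^2}\le\frac{2\gamma}{1-\gamma},\qquad \Big|\cos\tfrac{2\pi(x^*+k)}{b}-\cos\tfrac{2\pi(x^*+l)}{b}\Big|\le\frac{2\gamma}{b-\gamma},$$ and $$4\sin^2\frac{\pi(k-l)}{b}\le\Big(\frac{2\gamma\Delta_{b,\gamma}}{1-\gamma^2}\Big)^2+\Big(\frac{2\gamma}{b-\gamma}\Big)^2\le\Big(\frac{2\gamma}{1-\gamma}\Big)^2+\Big(\frac{2\gamma}{b-\gamma}\Big)^2.$$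
   Context: $\mathcal{A}=\{0,\dots,b-1\}$. $S(x,\mathbf{i})=\sum_{n\ge1}\gamma^{n-1}\psi\big(\frac{x+i_1+i_2b+\cdots+i_nb^{n-1}}{b^n}\big)$ for $\mathbf{i}\in\mathcal{A}^{\mathbb{Z}^+}$, $S'=\partial_xS$. Sequences $\mathbf{i},\mathbf{j}$ are $(\varepsilon,\delta)$-tangent at $x_0$ if $|S(x_0,\mathbf{i})-S(x_0,\mathbf{j})|\le\varepsilon$ and $|S'(x_0,\mathbf{i})-S'(x_0,\mathbf{j})|\le\delta$. $E(1,x_0;\varepsilon,\delta)$ is the set of pairs $(k,l)\in\mathcal{A}\times\mathcal{A}$ such that for some $\mathbf{u},\mathbf{v}\in\mathcal{A}^{\mathbb{Z}^+}$ the sequences $k\mathbf{u},l\mathbf{v}$ (prepending $k$, resp. $l$) are $(\varepsilon,\delta)$-tangent at $x_0$; $E(1,x_0)=\bigcap_{\varepsilon,\delta>0}E(1,x_0;\varepsilon,\delta)$. *)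

(* Defs.v *)
From Stdlib Require Import Reals Lra ClassicalEpsilon.
Open Scope R_scope.

Definition psi (x : R) : R := - 2 * PI * sin (2 * PI * x).

(* Sequences in A^{Z+} are nat -> nat, index 0 standing for i_1. *)
Definition in_alphabet (b : nat) (i : nat -> nat) : Prop := forall n, (i n < b)%nat.

(* n-th term (n >= 0, i.e. paper's index n+1):
   gamma^n * psi((x + i_1 + i_2 b + ... + i_{n+1} b^n) / b^{n+1}) *)
Definition S_term (b : nat) (gamma x : R) (i : nat -> nat) (n : nat) : R :=
  gamma ^ n * psi ((x + sum_f_R0 (fun m => INR (i m) * INR b ^ m) n) / INR b ^ (S n)).

Definition Ssum (b : nat) (gamma : R) (x : R) (i : nat -> nat) : R :=
  epsilon (inhabits 0) (fun l => infinite_sum (S_term b gamma x i) l).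

Definition prepend (k : nat) (u : nat -> nat) : nat -> nat :=
  fun n => match n with O => k | S m => u m end.

Definition tangent (b : nat) (gamma : R) (eps delta x0 : R) (i j : nat -> nat) : Prop :=
  Rabs (Ssum b gamma x0 i - Ssum b gamma x0 j) <= eps /\
  exists di dj : R,
    derivable_pt_lim (fun y => Ssum b gamma y i) x0 di /\
    derivable_pt_lim (fun y => Ssum b gamma y j) x0 dj /\
    Rabs (di - dj) <= delta.

Definition in_E1_eps (b : nat) (gamma x0 eps delta : R) (k l : nat) : Prop :=
  (k < b)%nat /\ (l < b)%nat /\
  exists u v : nat -> nat, in_alphabet b u /\ in_alphabet b v /\
    tangent b gamma eps delta x0 (prepend k u) (prepend l v).

Definition in_E1 (b : nat) (gamma x0 : R) (k l : nat) : Prop :=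
  forall eps delta : R, 0 < eps -> 0 < delta -> in_E1_eps b gamma x0 eps delta k l.

Definition Delta_bg (b : nat) (gamma : R) : R :=
  epsilon (inhabits 0) (fun d =>
    (exists t0, sin (INR b * t0) + gamma * sin t0 = d) /\
    forall t, sin (INR b * t) + gamma * sin t <= d).

(* Main.v *)
Require Import Defs.
From Stdlib Require Import Reals Lra Lia ClassicalEpsilon ZArith.
From Coquelicot Require Import Coquelicot.
Open Scope R_scope.

Lemma le_eps (X T : R) : (forall e, 0 < e -> X <= T + e) -> X <= T.
Proof.
  intros H. destruct (Rle_dec X T) as [h|h]; auto.
  specialize (H ((X - T)/2)). lra.
Qed.

Lemma sin_lip a c : Rabs (sin a - sin c) <= Rabs (a - c).
Proof.
  destruct (MVT_abs sin cos c a) as [z [Hz _]].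
  { intros; apply derivable_pt_lim_sin. }
  rewrite Hz. rewrite <- (Rmult_1_l (Rabs (a - c))) at 2.
  apply Rmult_le_compat_r; [apply Rabs_pos|]. apply Rabs_le. apply COS_bound.
Qed.

Lemma psi_lip a c : Rabs (psi a - psi c) <= 4 * PI ^ 2 * Rabs (a - c).
Proof.
  unfold psi.
  replace (- 2 * PI * sin (2 * PI * a) - - 2 * PI * sin (2 * PI * c))
    with ((2 * PI) * (- (sin (2 * PI * a) - sin (2*PI*c)))) by ring.
  rewrite Rabs_mult, Rabs_Ropp. pose proof PI_RGT_0.
  rewrite (Rabs_right (2*PI)) by lra.
  replace (4 * PI ^ 2 * Rabs (a - c)) with (2 * PI * Rabs (2 * PI * a - 2 * PI * c)).
  2:{ replace (2 * PI * a - 2 * PI * c) with ((2*PI) * (a - c)) by ring.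
      rewrite Rabs_mult, (Rabs_right (2*PI)) by lra. ring. }
  apply Rmult_le_compat_l; [lra|]. apply sin_lip.
Qed.

Lemma psi_bound a : Rabs (psi a) <= 2 * PI.
Proof.
  unfold psi. rewrite Rabs_mult. pose proof PI_RGT_0.
  rewrite (Rabs_left (-2 * PI)) by lra.
  rewrite <- (Rmult_1_r (2 * PI)) at 2.
  replace (- (-2 * PI)) with (2 * PI) by ring.
  apply Rmult_le_compat_l; [lra|]. apply Rabs_le. apply SIN_bound.
Qed.

Lemma ex_geom c q : 0 <= q < 1 -> is_series (fun n => c * q ^ n) (c / (1 - q)).
Proof.
  intros Hq. unfold Rdiv. apply (is_series_scal_l c (fun n => q ^ n)).
  apply is_series_geom. rewrite Rabs_right; lra.
Qed.

Lemma S_term_bound b gamma x u n : 0 <= gamma ->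
  Rabs (S_term b gamma x u n) <= 2 * PI * gamma ^ n.
Proof.
  intros Hg. unfold S_term. rewrite Rabs_mult, Rabs_right by (apply Rle_ge, pow_le; lra).
  rewrite Rmult_comm. apply Rmult_le_compat_r. apply pow_le; lra. apply psi_bound.
Qed.

Lemma ex_le_R (a c : nat -> R) : (forall n, Rabs (a n) <= c n) -> ex_series c ->
  ex_series (fun n => Rabs (a n)).
Proof.
  intros H Hc. apply (@ex_series_le R_AbsRing R_CompleteNormedModule _ c); auto.
  intros n. change (Rabs (Rabs (a n)) <= c n). rewrite Rabs_Rabsolu. auto.
Qed.

Lemma S_ex b gamma x u : 0 <= gamma < 1 -> ex_series (S_term b gamma x u).
Proof.
  intros Hg. apply ex_series_Rabs, (ex_le_R _ (fun n => 2 * PI * gamma ^ n)).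
  intros n. apply S_term_bound; lra.
  eexists. apply ex_geom. lra.
Qed.

Lemma Ssum_eq b gamma x u : 0 <= gamma < 1 -> Ssum b gamma x u = Series (S_term b gamma x u).
Proof.
  intros Hg. destruct (S_ex b gamma x u Hg) as [l Hl].
  unfold Ssum.
  pose proof (epsilon_spec (inhabits 0) (fun l => infinite_sum (S_term b gamma x u) l)
     (ex_intro _ l (proj1 (is_series_Reals _ _) Hl))) as H.
  apply is_series_Reals in H. symmetry. apply is_series_unique. exact H.
Qed.

Lemma sum_prepend b k u n :
  sum_f_R0 (fun m => INR (prepend k u m) * INR b ^ m) (S n) =
  INR k + INR b * sum_f_R0 (fun m => INR (u m) * INR b ^ m) n.
Proof.
  induction n.
  - simpl. ring.
  - rewrite tech5. rewrite IHn. simpl. ring.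
Qed.

Lemma S_term_prepend b gamma x k u n : (0 < b)%nat ->
  S_term b gamma x (prepend k u) (S n) = gamma * S_term b gamma ((x + INR k) / INR b) u n.
Proof.
  intros Hb. unfold S_term. rewrite sum_prepend.
  assert (HB : INR b <> 0) by (apply not_0_INR; lia).
  assert (HBn : INR b ^ S n <> 0) by (apply pow_nonzero; auto).
  replace ((x + (INR k + INR b * sum_f_R0 (fun m : nat => INR (u m) * INR b ^ m) n)) / INR b ^ S (S n))
    with (((x + INR k) / INR b + sum_f_R0 (fun m : nat => INR (u m) * INR b ^ m) n) / INR b ^ S n).
  2:{ change (INR b ^ S (S n)) with (INR b * INR b ^ S n). field. auto. }
  simpl. ring.
Qed.

Lemma Ssum_prepend b gamma x k u : (0 < b)%nat -> 0 <= gamma < 1 ->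
  Ssum b gamma x (prepend k u) = psi ((x + INR k) / INR b) + gamma * Ssum b gamma ((x + INR k) / INR b) u.
Proof.
  intros Hb Hg. rewrite !Ssum_eq by auto.
  rewrite Series_incr_1 by (apply S_ex; auto).
  rewrite (Series_ext _ (fun n => gamma * S_term b gamma ((x + INR k) / INR b) u n))
    by (intros; apply S_term_prepend; auto).
  rewrite Series_scal_l. f_equal.
  unfold S_term. simpl. rewrite Rmult_1_l. f_equal. assert (INR b <> 0) by (apply not_0_INR; lia). field. auto.
Qed.

Lemma term_lip b gamma x y u n : (0 < b)%nat -> 0 <= gamma ->
  Rabs (S_term b gamma x u n - S_term b gamma y u n) <=
  (4 * PI ^ 2 * Rabs (x - y) / INR b) * (gamma / INR b) ^ n.
Proof.
  intros Hb Hg. unfold S_term.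
  assert (HB : 0 < INR b) by (apply lt_0_INR; lia).
  assert (HBn : 0 < INR b ^ S n) by (apply pow_lt; auto).
  rewrite <- Rmult_minus_distr_l, Rabs_mult, (Rabs_right (gamma ^ n)) by (apply Rle_ge, pow_le; lra).
  eapply Rle_trans. apply Rmult_le_compat_l. apply pow_le; lra. apply psi_lip.
  replace ((x + sum_f_R0 (fun m : nat => INR (u m) * INR b ^ m) n) / INR b ^ S n -
     (y + sum_f_R0 (fun m : nat => INR (u m) * INR b ^ m) n) / INR b ^ S n)
    with ((x - y) / INR b ^ S n) by (field; lra).
  unfold Rdiv at 1. rewrite Rabs_mult, (Rabs_right (/ INR b ^ S n)) by (apply Rle_ge, Rlt_le, Rinv_0_lt_compat; auto).
  unfold Rdiv. rewrite Rpow_mult_distr, pow_inv. simpl pow.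
  right. field. split; try lra. apply pow_nonzero; lra.
Qed.

Lemma Ssum_lip b gamma x y u : (2 <= b)%nat -> 0 <= gamma < 1 ->
  Rabs (Ssum b gamma x u - Ssum b gamma y u) <= 4 * PI ^ 2 / (INR b - gamma) * Rabs (x - y).
Proof.
  intros Hb Hg.
  assert (HB : 2 <= INR b) by (replace 2 with (INR 2) by (simpl; ring); apply le_INR; auto).
  rewrite !Ssum_eq by auto. rewrite <- Series_minus by (apply S_ex; auto).
  set (c := 4 * PI ^ 2 * Rabs (x - y) / INR b). set (q := gamma / INR b).
  assert (Hq : 0 <= q < 1).
  { unfold q. split. apply Rmult_le_pos; [lra|]. apply Rlt_le, Rinv_0_lt_compat; lra.
    apply Rmult_lt_reg_r with (INR b); [lra|]. unfold Rdiv; rewrite Rmult_assoc, Rinv_l; lra. }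
  assert (Hex : ex_series (fun n => c * q ^ n)) by (eexists; apply ex_geom; auto).
  eapply Rle_trans. apply Series_Rabs. apply (ex_le_R _ _ (fun n => term_lip b gamma x y u n ltac:(lia) ltac:(lra)) Hex).
  eapply Rle_trans. apply Series_le; [|exact Hex].
  intros n; split; [apply Rabs_pos|]. apply term_lip; [lia|lra].
  rewrite (is_series_unique _ _ (ex_geom c q Hq)).
  unfold c, q. right. field. lra.
Qed.

Lemma sum_pair (a : nat -> R) n :
  sum_f_R0 (fun j => a (2 * j)%nat + a (S (2 * j))) n = sum_f_R0 a (S (2 * n)).
Proof.
  induction n.
  - simpl. ring.
  - rewrite tech5, IHn. replace (S (2 * S n)) with (S (S (S (2 * n)))) by lia.
    rewrite !tech5. replace (2 * S n)%nat with (S (S (2 * n))) by lia. ring.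
Qed.

Lemma zshift b x u n : (0 < b)%nat ->
  INR b * (2 * PI * ((x + sum_f_R0 (fun m => INR (u m) * INR b ^ m) (S n)) / INR b ^ S (S n)))
  = 2 * PI * ((x + sum_f_R0 (fun m => INR (u m) * INR b ^ m) n) / INR b ^ S n) + 2 * INR (u (S n)) * PI.
Proof.
  intros Hb. assert (HB : INR b <> 0) by (apply not_0_INR; lia).
  rewrite tech5. change (INR b ^ S (S n)) with (INR b * INR b ^ S n).
  field. split; auto. apply pow_nonzero; auto.
Qed.

Lemma Ssum_bound b gamma x u D : (2 <= b)%nat -> 0 <= gamma < 1 ->
  (forall t, Rabs (sin (INR b * t) + gamma * sin t) <= D) ->
  Rabs (Ssum b gamma x u) <= 2 * PI * D / (1 - gamma ^ 2).
Proof.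
  intros Hb Hg HD. rewrite Ssum_eq by auto.
  set (a := S_term b gamma x u).
  set (p := fun j => a (2 * j)%nat + a (S (2 * j))).
  assert (Hp : is_series p (Series a)).
  { apply is_series_Reals. pose proof (Series_correct _ (S_ex b gamma x u Hg)) as H.
    apply is_series_Reals in H. intros e He. destruct (H e He) as [N HN].
    exists N. intros n Hn. unfold p. rewrite sum_pair. apply HN. lia. }
  rewrite <- (is_series_unique _ _ Hp).
  assert (Hg2 : 0 <= gamma ^ 2 < 1) by (split; nra).
  assert (HD0 : 0 <= D) by (specialize (HD 0); pose proof (Rabs_pos (sin (INR b * 0) + gamma * sin 0)); lra).
  assert (Hpb : forall j, Rabs (p j) <= (2 * PI * D) * (gamma ^ 2) ^ j).
  { intros j. unfold p, a, S_term.
    set (z := fun n => (x + sum_f_R0 (fun m => INR (u m) * INR b ^ m) n) / INR b ^ S n).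
    fold (z (2 * j)%nat). fold (z (S (2 * j))). unfold psi.
    assert (E : sin (2 * PI * z (2 * j)%nat) = sin (INR b * (2 * PI * z (S (2 * j))))).
    { unfold z. rewrite zshift by lia. rewrite sin_period. reflexivity. }
    rewrite E. rewrite <- pow_mult.
    replace (gamma ^ (2 * j) * (-2 * PI * sin (INR b * (2 * PI * z (S (2 * j))))) +
      gamma ^ S (2 * j) * (-2 * PI * sin (2 * PI * z (S (2 * j)))))
     with ((-2 * PI * gamma ^ (2 * j)) * (sin (INR b * (2 * PI * z (S (2 * j)))) + gamma * sin (2 * PI * z (S (2 * j))))) by (simpl; ring).
    rewrite Rabs_mult. pose proof PI_RGT_0.
    assert (0 <= gamma ^ (2 * j)) by (apply pow_le; lra).
    rewrite Rabs_left1 by nra.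
    replace (- (-2 * PI * gamma ^ (2 * j))) with (2 * PI * gamma ^ (2 * j)) by ring.
    replace (2 * PI * D * gamma ^ (2 * j)) with (2 * PI * gamma ^ (2 * j) * D) by ring.
    apply Rmult_le_compat_l. nra. apply HD. }
  assert (Hex : ex_series (fun n => (2 * PI * D) * (gamma ^ 2) ^ n)) by (eexists; apply ex_geom; auto).
  eapply Rle_trans. apply Series_Rabs. apply (ex_le_R _ _ Hpb Hex).
  eapply Rle_trans. apply Series_le; [|exact Hex].
  intros n; split; [apply Rabs_pos|]. apply Hpb.
  rewrite (is_series_unique _ _ (ex_geom _ _ Hg2)). right. reflexivity.
Qed.

Lemma sin_Zperiod x m : sin (x + 2 * IZR m * PI) = sin x.
Proof.
  destruct (Z_le_gt_dec 0 m) as [h|h].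
  - rewrite <- (Z2Nat.id m) by lia. rewrite <- INR_IZR_INZ. apply sin_period.
  - replace m with (- Z.of_nat (Z.to_nat (- m)))%Z by lia.
    rewrite opp_IZR, <- INR_IZR_INZ.
    rewrite <- (sin_period (x + 2 * - INR (Z.to_nat (- m)) * PI) (Z.to_nat (-m))).
    f_equal. ring.
Qed.

Lemma Delta_spec b gamma :
  (exists t0, sin (INR b * t0) + gamma * sin t0 = Delta_bg b gamma) /\
  forall t, sin (INR b * t) + gamma * sin t <= Delta_bg b gamma.
Proof.
  unfold Delta_bg. apply epsilon_spec.
  set (f := fun t => sin (INR b * t) + gamma * sin t).
  pose proof PI_RGT_0.
  destruct (continuity_ab_maj f 0 (2 * PI)) as [M [HM HMr]]. lra.
  { intros c _. apply continuity_pt_filterlim. apply (ex_derive_continuous f).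
    unfold f. auto_derive. auto. }
  exists (f M). split. exists M; reflexivity.
  intros t. set (n := (up (t / (2 * PI)) - 1)%Z).
  destruct (archimed (t / (2 * PI))) as [A1 A2].
  assert (Hn1 : IZR n <= t / (2 * PI)) by (unfold n; rewrite minus_IZR; simpl; lra).
  assert (Hn2 : t / (2 * PI) < IZR n + 1) by (unfold n; rewrite minus_IZR; simpl; lra).
  set (t' := t - 2 * PI * IZR n).
  assert (Ht' : 0 <= t' <= 2 * PI).
  { unfold t'. split.
    - apply Rmult_le_compat_r with (r := 2 * PI) in Hn1; [|lra].
      unfold Rdiv in Hn1. rewrite Rmult_assoc, Rinv_l in Hn1 by lra. lra.
    - apply Rmult_lt_compat_r with (r := 2 * PI) in Hn2; [|lra].
      unfold Rdiv in Hn2. rewrite Rmult_assoc, Rinv_l in Hn2 by lra. lra. }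
  replace (sin (INR b * t) + gamma * sin t) with (f t') by
   (unfold f, t'; f_equal;
    [ rewrite <- (sin_Zperiod _ (Z.of_nat b * n)); f_equal; rewrite mult_IZR, <- INR_IZR_INZ; ring
    | f_equal; rewrite <- (sin_Zperiod _ n); f_equal; ring ]).
  apply HM; auto.
Qed.

Lemma deriv_bound f x d K :
  (forall y, Rabs (f y - f x) <= K * Rabs (y - x)) ->
  derivable_pt_lim f x d -> Rabs d <= K.
Proof.
  intros HL Hd. destruct (Rle_dec (Rabs d) K) as [h|h]; auto. exfalso.
  destruct (Hd (Rabs d - K) ltac:(lra)) as [del Hdel].
  pose proof (cond_pos del) as Hdp.
  set (h0 := del / 2).
  assert (Hh : h0 <> 0) by (unfold h0; lra).
  assert (Hh2 : Rabs h0 < del) by (unfold h0; rewrite Rabs_right; lra).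
  specialize (Hdel h0 Hh Hh2).
  specialize (HL (x + h0)). replace (x + h0 - x) with h0 in HL by ring.
  set (q := (f (x + h0) - f x) / h0) in Hdel.
  assert (Hq : Rabs q <= K).
  { assert (E : f (x + h0) - f x = q * h0) by (unfold q; field; auto).
    rewrite E, Rabs_mult in HL. pose proof (Rabs_pos_lt _ Hh).
    apply Rmult_le_reg_r with (Rabs h0); auto. }
  pose proof (Rabs_triang_inv q d). rewrite Rabs_minus_sym in Hdel. 
  pose proof (Rabs_triang_inv d q). lra.
Qed.

Lemma psi_deriv c k B : B <> 0 ->
  derivable_pt_lim (fun y => psi ((y + c) / B)) k (- 4 * PI ^ 2 * cos (2 * PI * ((k + c) / B)) / B).
Proof.
  intros HB. apply is_derive_Reals. unfold psi. auto_derive. auto. unfold Rdiv. ring.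
Qed.

Lemma abs_le_iff x y : Rabs x <= y <-> - y <= x <= y.
Proof. unfold Rabs; destruct (Rcase_abs x); split; intros; lra. Qed.

Theorem lemma3p3 (b : nat) (gamma : R) (k l : nat) (xs : R) :
  (2 <= b)%nat -> / INR b < gamma -> gamma < 1 ->
  (k < b)%nat -> (l < b)%nat ->
  in_E1 b gamma xs k l ->
  Rabs (sin (2 * PI * (xs + INR k) / INR b) - sin (2 * PI * (xs + INR l) / INR b))
    <= 2 * Delta_bg b gamma * gamma / (1 - gamma ^ 2) /\
  2 * Delta_bg b gamma * gamma / (1 - gamma ^ 2) <= 2 * gamma / (1 - gamma) /\
  Rabs (cos (2 * PI * (xs + INR k) / INR b) - cos (2 * PI * (xs + INR l) / INR b))
    <= 2 * gamma / (INR b - gamma) /\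
  4 * (sin (PI * (INR k - INR l) / INR b)) ^ 2
    <= (2 * gamma * Delta_bg b gamma / (1 - gamma ^ 2)) ^ 2 + (2 * gamma / (INR b - gamma)) ^ 2 /\
  (2 * gamma * Delta_bg b gamma / (1 - gamma ^ 2)) ^ 2 + (2 * gamma / (INR b - gamma)) ^ 2
    <= (2 * gamma / (1 - gamma)) ^ 2 + (2 * gamma / (INR b - gamma)) ^ 2.
Proof.
  intros Hb Hgl Hgu Hk Hl HE.
  assert (HB : 2 <= INR b) by (replace 2 with (INR 2) by (simpl; ring); apply le_INR; auto).
  assert (Hg0 : 0 < gamma) by (pose proof (Rinv_0_lt_compat (INR b) ltac:(lra)); lra).
  assert (Hg : 0 <= gamma < 1) by lra.
  set (D := Delta_bg b gamma).
  destruct (Delta_spec b gamma) as [[t0 Ht0] HDmax]. fold D in Ht0, HDmax.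
  assert (HDabs : forall t, Rabs (sin (INR b * t) + gamma * sin t) <= D).
  { intros t. apply abs_le_iff. split; [|apply HDmax].
    specialize (HDmax (- t)). replace (INR b * - t) with (- (INR b * t)) in HDmax by ring.
    rewrite !sin_neg in HDmax. lra. }
  assert (HD1 : D <= 1 + gamma).
  { rewrite <- Ht0. pose proof (SIN_bound (INR b * t0)). pose proof (SIN_bound t0). nra. }
  assert (HD0 : 0 <= D) by (specialize (HDmax 0); rewrite Rmult_0_r, sin_0 in HDmax; lra).
  pose proof PI_RGT_0 as HPI.
  set (A := 2 * PI * (xs + INR k) / INR b). set (C := 2 * PI * (xs + INR l) / INR b).
  assert (psiA : psi ((xs + INR k) / INR b) = - 2 * PI * sin A)
    by (unfold psi, A; do 2 f_equal; unfold Rdiv; ring).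
  assert (psiC : psi ((xs + INR l) / INR b) = - 2 * PI * sin C)
    by (unfold psi, C; do 2 f_equal; unfold Rdiv; ring).
  assert (Hg2 : 0 < 1 - gamma ^ 2) by nra.
  set (M := 2 * PI * D / (1 - gamma ^ 2)).
  set (T1 := 2 * D * gamma / (1 - gamma ^ 2)).
  assert (HT1 : 2 * PI * T1 = 2 * gamma * M) by (unfold T1, M; field; lra).
  assert (H1 : Rabs (sin A - sin C) <= T1).
  { apply le_eps; intros e He.
    destruct (HE (2 * PI * e) 1 ltac:(nra) ltac:(lra)) as [_ [_ [u [v [_ [_ [Ht _]]]]]]].
    rewrite !Ssum_prepend in Ht by (lia || lra). rewrite psiA, psiC in Ht.
    pose proof (Ssum_bound b gamma ((xs + INR k) / INR b) u D Hb Hg HDabs) as Hu.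
    pose proof (Ssum_bound b gamma ((xs + INR l) / INR b) v D Hb Hg HDabs) as Hv.
    fold M in Hu, Hv.
    apply abs_le_iff in Ht, Hu, Hv.
    set (Su := Ssum b gamma ((xs + INR k) / INR b) u) in *.
    set (Sv := Ssum b gamma ((xs + INR l) / INR b) v) in *.
    assert (-(gamma * M) <= gamma * Su <= gamma * M) by (split; nra).
    assert (-(gamma * M) <= gamma * Sv <= gamma * M) by (split; nra).
    apply abs_le_iff; split; apply Rmult_le_reg_l with (2 * PI); try lra. }
  assert (HBg : 0 < INR b - gamma) by lra.
  set (L := 4 * PI ^ 2 / (INR b - gamma)).
  set (K := 2 * gamma * L / INR b).
  set (T3 := 2 * gamma / (INR b - gamma)).
  assert (H3 : Rabs (cos A - cos C) <= T3).
  { apply le_eps; intros e He.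
    assert (Hdel : 0 < 4 * PI ^ 2 * e / INR b) by (apply Rdiv_lt_0_compat; [|lra]; apply Rmult_lt_0_compat; [|lra]; apply Rmult_lt_0_compat; [lra| apply pow_lt; lra]).
    destruct (HE 1 _ Rlt_0_1 Hdel) as [_ [_ [u [v [_ [_ [_ Ht]]]]]]].
    destruct Ht as [di [dj [Hdi [Hdj Hdd]]]].
    set (Phi := fun y => Ssum b gamma y (prepend k u) - Ssum b gamma y (prepend l v)
       - (psi ((y + INR k) / INR b) - psi ((y + INR l) / INR b))).
    assert (HPd : derivable_pt_lim Phi xs
       (di - dj - (- 4 * PI ^ 2 * cos (2 * PI * ((xs + INR k) / INR b)) / INR b
                  - - 4 * PI ^ 2 * cos (2 * PI * ((xs + INR l) / INR b)) / INR b))).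
    { pose proof (derivable_pt_lim_minus _ _ _ _ _ Hdi Hdj) as D1.
      pose proof (derivable_pt_lim_minus _ _ _ _ _ (psi_deriv (INR k) xs (INR b) ltac:(lra))
                    (psi_deriv (INR l) xs (INR b) ltac:(lra))) as D2.
      pose proof (derivable_pt_lim_minus _ _ _ _ _ D1 D2) as D3.
      exact D3. }
    assert (HPL : forall y, Rabs (Phi y - Phi xs) <= K * Rabs (y - xs)).
    { intros y. unfold Phi. rewrite !Ssum_prepend by (lia || lra).
      pose proof (Ssum_lip b gamma ((y + INR k) / INR b) ((xs + INR k) / INR b) u Hb Hg) as L1.
      pose proof (Ssum_lip b gamma ((y + INR l) / INR b) ((xs + INR l) / INR b) v Hb Hg) as L2.
      fold L in L1, L2.
      replace ((y + INR k) / INR b - (xs + INR k) / INR b) with ((y - xs) / INR b) in L1 by (field; lra).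
      replace ((y + INR l) / INR b - (xs + INR l) / INR b) with ((y - xs) / INR b) in L2 by (field; lra).
      assert (E : Rabs ((y - xs) / INR b) = Rabs (y - xs) / INR b).
      { unfold Rdiv. rewrite Rabs_mult, (Rabs_right (/ INR b)); auto.
        apply Rle_ge, Rlt_le, Rinv_0_lt_compat; lra. }
      rewrite E in L1, L2.
      set (a1 := Ssum b gamma ((y + INR k) / INR b) u) in *.
      set (a2 := Ssum b gamma ((xs + INR k) / INR b) u) in *.
      set (c1 := Ssum b gamma ((y + INR l) / INR b) v) in *.
      set (c2 := Ssum b gamma ((xs + INR l) / INR b) v) in *.
      replace (psi ((y + INR k) / INR b) + gamma * a1 - (psi ((y + INR l) / INR b) + gamma * c1) -
        (psi ((y + INR k) / INR b) - psi ((y + INR l) / INR b)) -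
        (psi ((xs + INR k) / INR b) + gamma * a2 - (psi ((xs + INR l) / INR b) + gamma * c2) -
         (psi ((xs + INR k) / INR b) - psi ((xs + INR l) / INR b))))
        with (gamma * ((a1 - a2) - (c1 - c2))) by ring.
      rewrite Rabs_mult, (Rabs_right gamma) by lra.
      replace (K * Rabs (y - xs)) with (gamma * (L * (Rabs (y - xs) / INR b) + L * (Rabs (y - xs) / INR b)))
        by (unfold K; field; lra).
      apply Rmult_le_compat_l; [lra|].
      eapply Rle_trans; [apply Rabs_triang|]. rewrite Rabs_Ropp. lra. }
    pose proof (deriv_bound Phi xs _ K HPL HPd) as Hb2.
    replace (cos (2 * PI * ((xs + INR k) / INR b))) with (cos A) in Hb2 by (unfold A; f_equal; unfold Rdiv; ring).
    replace (cos (2 * PI * ((xs + INR l) / INR b))) with (cos C) in Hb2 by (unfold C; f_equal; unfold Rdiv; ring).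
    apply abs_le_iff in Hb2, Hdd.
    assert (HKT : K = 4 * PI ^ 2 / INR b * T3) by (unfold K, L, T3; field; lra).
    assert (HP4 : 0 < 4 * PI ^ 2 / INR b) by (apply Rdiv_lt_0_compat; [|lra]; apply Rmult_lt_0_compat; [lra| apply pow_lt; lra]).
    set (P4 := 4 * PI ^ 2 / INR b) in *.
    assert (Ed : 4 * PI ^ 2 * e / INR b = P4 * e) by (unfold P4; field; lra).
    assert (Ecos : - 4 * PI ^ 2 * cos A / INR b - - 4 * PI ^ 2 * cos C / INR b = - P4 * (cos A - cos C))
      by (unfold P4; field; lra).
    rewrite Ecos in Hb2. rewrite Ed in Hdd. rewrite HKT in Hb2.
    apply abs_le_iff; split; apply Rmult_le_reg_l with P4; try lra. }
  assert (HT1e : 2 * gamma * D / (1 - gamma ^ 2) = T1) by (unfold T1; field; lra).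
  assert (HT1b : T1 <= 2 * gamma / (1 - gamma)).
  { replace (2 * gamma / (1 - gamma)) with (2 * (1 + gamma) * gamma / (1 - gamma ^ 2)) by (field; lra).
    unfold T1, Rdiv. apply Rmult_le_compat_r. apply Rlt_le, Rinv_0_lt_compat; lra. nra. }
  assert (HT10 : 0 <= T1) by (pose proof (Rabs_pos (sin A - sin C)); lra).
  assert (HT30 : 0 <= T3) by (pose proof (Rabs_pos (cos A - cos C)); lra).
  assert (Hid : 4 * (sin (PI * (INR k - INR l) / INR b)) ^ 2 = (sin A - sin C) ^ 2 + (cos A - cos C) ^ 2).
  { set (th := PI * (INR k - INR l) / INR b).
    assert (EA : A - C = 2 * th) by (unfold A, C, th; field; lra).
    pose proof (cos_minus A C) as CM. rewrite EA, cos_2a_sin in CM.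
    pose proof (sin2_cos2 A). pose proof (sin2_cos2 C). unfold Rsqr in *. nra. }
  fold D. rewrite HT1e. fold T1 T3.
  split; [exact H1|]. split; [exact HT1b|]. split; [exact H3|].
  rewrite Hid. split.
  - rewrite <- (pow2_abs (sin A - sin C)), <- (pow2_abs (cos A - cos C)).
    pose proof (Rabs_pos (sin A - sin C)). pose proof (Rabs_pos (cos A - cos C)). nra.
  - nra.
Qed.
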